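(* Consider the entry game with $\mathcal{W}=\{1,2\}$, $\mathcal{X}=\{0,1\}$, $\mathcal{C}(w)=\mathcal{X}$ for all $w$, and $F(m,w,x)=-x(-3m^x\{1\}+w)$. For $q\in[0,1]$ let $\lambda_q=q\delta_2+(1-q)\delta_1$. Then for each $q\in[0,1]$, $\mathcal{M}(\lambda_q)=\{m_q\}$, where $m_q\in\mathcal{P}(\mathcal{W}\times\mathcal{X})$ is given by: if $q\le1/3$, $m_q\{(1,0)\}=2/3$, $m_q\{(1,1)\}=1/3-q$, $m_q\{(2,0)\}=0$, $m_q\{(2,1)\}=q$; if $1/3<q<2/3$, $m_q\{(1,0)\}=1-q$, $m_q\{(1,1)\}=0$, $m_q\{(2,0)\}=0$, $m_q\{(2,1)\}=q$; if $q\ge2/3$, $m_q\{(1,0)\}=1-q$, $m_q\{(1,1)\}=0$, $m_q\{(2,0)\}=q-2/3$, $m_q\{(2,1)\}=2/3$.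
   Context: $m^x$ denotes the second marginal of $m\in\mathcal{P}(\mathcal{W}\times\mathcal{X})$. For $\lambda\in\mathcal{P}(\mathcal{W})$, $\mathcal{M}(\lambda)$ (Cournot-Nash equilibria) is the set of $m\in\mathcal{P}(\mathcal{W}\times\mathcal{X})$ with first marginal $\lambda$ such that for $m$-a.e. $(w,x)$, $x\in\mathcal{C}(w)$ and $F(m,w,x)=\min_{y\in\mathcal{C}(w)}F(m,w,y)$. *)

(* Defs.v *)
From HB Require Import structures.
From mathcomp Require Import all_boot all_order all_algebra.
Set Implicit Arguments. Unset Strict Implicit. Unset Printing Implicit Defensive.
Import Order.TTheory GRing.Theory Num.Theory.
Local Open Scope ring_scope.

(* Player types W = {1,2}: encoded as 'I_2, index i standing for type i+1. *)
Definition W := 'I_2.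
Definition X := 'I_2.
Definition w1 : W := ord0.
Definition w2 : W := ord_max.
Definition x0 : X := ord0.
Definition x1 : X := ord_max.

Section Game.
Variable R : numFieldType.

Definition wval (w : W) : R := (val w).+1%:R.
Definition xval (x : X) : R := (val x)%:R.

Definition is_prob (T : finType) (m : {ffun T -> R}) : Prop :=
  (forall t, 0 <= m t) /\ \sum_(t : T) m t = 1.

Definition marg_w (m : {ffun W * X -> R}) (w : W) : R := \sum_(x : X) m (w, x).
Definition marg_x (m : {ffun W * X -> R}) (x : X) : R := \sum_(w : W) m (w, x).

Definition C (w : W) : {set X} := [set: X].

Definition F (m : {ffun W * X -> R}) (w : W) (x : X) : R :=
  - xval x * (- 3 * marg_x m x1 + wval w).

(* m is a Cournot-Nash equilibrium with first marginal lambda: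
   m in P(W x X), first marginal lambda, and for m-a.e. (w,x)
   (i.e. every atom of positive mass) x in C(w) and
   F(m,w,x) = min_{y in C(w)} F(m,w,y). *)
Definition CN_eq (lambda : {ffun W -> R}) (m : {ffun W * X -> R}) : Prop :=
  is_prob m /\
  (forall w, marg_w m w = lambda w) /\
  (forall w x, 0 < m (w, x) ->
     x \in C w /\ forall y, y \in C w -> F m w x <= F m w y).

Definition lambda_q (q : R) : {ffun W -> R} :=
  [ffun w => if w == w2 then q else 1 - q].

Definition m_q (q : R) : {ffun W * X -> R} :=
  [ffun p : W * X =>
     let '(w, x) := p in
     if q <= 3^-1 then
       (if w == w1 then (if x == x0 then 2/3 else 3^-1 - q)
        else (if x == x0 then 0 else q))
     else if q < 2/3 then
       (if w == w1 then (if x == x0 then 1 - q else 0)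
        else (if x == x0 then 0 else q))
     else
       (if w == w1 then (if x == x0 then 1 - q else 0)
        else (if x == x0 then q - 2/3 else 2/3))].

End Game.

(* Main.v *)
Require Import Defs.
From HB Require Import structures.
From mathcomp Require Import all_boot all_order all_algebra.
From mathcomp Require Import lra.
Import Order.TTheory GRing.Theory Num.Theory.
Local Open Scope ring_scope.

Lemma I2_cases (w : 'I_2) : w = ord0 \/ w = ord_max.
Proof.
case: w => [[|[|k]] Hk].
- by left; apply: val_inj.
- by right; apply: val_inj.
- by [].
Qed.

Lemma sum2 (R : realFieldType) (f : 'I_2 -> R) :
  \sum_(i : 'I_2) f i = f ord0 + f ord_max.
Proof.
rewrite big_ord_recr big_ord_recl big_ord0 ?add0r ?addr0 /=.
rewrite addr0; congr (f _ + _); exact: val_inj.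
Qed.

Section S.
Variable R : realFieldType.

Lemma CN_iff (q : R) (m : {ffun W * X -> R}) :
  let a := m (w1, x0) in let b := m (w1, x1) in
  let c := m (w2, x0) in let d := m (w2, x1) in
  CN_eq (lambda_q q) m <->
  [/\ [/\ 0 <= a, 0 <= b, 0 <= c & 0 <= d],
      a + b = 1 - q, c + d = q &
      [/\ 0 < a -> 1 <= 3 * (b + d), 0 < b -> 3 * (b + d) <= 1,
          0 < c -> 2 <= 3 * (b + d) & 0 < d -> 3 * (b + d) <= 2]].
Proof.
move=> a b c d.
have Hsum : \sum_(t : W * X) m t = a + b + c + d.
  rewrite (eq_bigr (fun t => m (t.1, t.2))); last by case.
  rewrite -(pair_bigA _ (fun i j => m (i, j))) /= sum2 !sum2.
  rewrite /a /b /c /d /w1 /w2 /x0 /x1; lra.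
have Hmx : marg_x m x1 = b + d by rewrite /marg_x sum2.
have Hmw1 : marg_w m w1 = a + b by rewrite /marg_w sum2.
have Hmw2 : marg_w m w2 = c + d by rewrite /marg_w sum2.
have HF0 : forall w, F m w x0 = 0 by move=> w; rewrite /F /xval /= mulr0n oppr0 mul0r.
have HF1 : forall w, F m w x1 = 3 * (b + d) - wval R w.
  by move=> w; rewrite /F /xval Hmx /=; lra.
have Hw1 : wval R w1 = 1 by rewrite /wval.
have Hw2 : wval R w2 = 2 by rewrite /wval.
have Hl1 : lambda_q q w1 = 1 - q by rewrite /lambda_q ffunE.
have Hl2 : lambda_q q w2 = q by rewrite /lambda_q ffunE eqxx.
split.
- move=> [[Hpos H1] [Hmarg Heq]].
  have := Hmarg w1; have := Hmarg w2.
  rewrite Hmw1 Hmw2 Hl1 Hl2 => E2 E1.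
  split; [split; exact: Hpos|done|done|split].
  + move=> /(Heq w1 x0) [_ /(_ x1 (in_setT _))]. rewrite HF0 HF1 Hw1. lra.
  + move=> /(Heq w1 x1) [_ /(_ x0 (in_setT _))]. rewrite HF0 HF1 Hw1. lra.
  + move=> /(Heq w2 x0) [_ /(_ x1 (in_setT _))]. rewrite HF0 HF1 Hw2. lra.
  + move=> /(Heq w2 x1) [_ /(_ x0 (in_setT _))]. rewrite HF0 HF1 Hw2. lra.
- move=> [[Ha Hb Hc Hd] E1 E2 [Ia Ib Ic Id]].
  split; [split|split].
  + move=> [w x]; case: (I2_cases w) => ->; case: (I2_cases x) => ->; done.
  + rewrite Hsum; lra.
  + move=> w; case: (I2_cases w) => ->.
    * by rewrite -/w1 Hmw1 Hl1.
    * by rewrite -/w2 Hmw2 Hl2.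
  + move=> w x Hp; split; first exact: in_setT.
    move=> y _.
    case: (I2_cases w) Hp => ->; case: (I2_cases x) => ->; case: (I2_cases y) => -> Hp;
      rewrite -/w1 -/w2 -/x0 -/x1 ?HF0 ?HF1 ?Hw1 ?Hw2 ?lexx //.
    * move: (Ia Hp); lra.
    * move: (Ib Hp); lra.
    * move: (Ic Hp); lra.
    * move: (Id Hp); lra.
Qed.

End S.

Ltac split0 H := rewrite le_eqVlt in H; case/orP: H => [/eqP H | H].

Ltac use H I := split0 H; [ | have := I H; intro ].

Lemma key {R : realFieldType} (a b c d q : R) : 0 <= q <= 1 ->
  [/\ [/\ 0 <= a, 0 <= b, 0 <= c & 0 <= d], a + b = 1 - q, c + d = q &
      [/\ 0 < a -> 1 <= 3 * (b + d), 0 < b -> 3 * (b + d) <= 1,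
          0 < c -> 2 <= 3 * (b + d) & 0 < d -> 3 * (b + d) <= 2]] ->
  [/\ q <= 3^-1 -> [/\ a = 2/3, b = 3^-1 - q, c = 0 & d = q],
      3^-1 < q < 2/3 -> [/\ a = 1 - q, b = 0, c = 0 & d = q] &
      2/3 <= q -> [/\ a = 1 - q, b = 0, c = q - 2/3 & d = 2/3]].
Proof.
move=> /andP[q0 q1] [[Ha Hb Hc Hd] E1 E2 [Ia Ib Ic Id]].
use Ha Ia; use Hb Ib; use Hc Ic; use Hd Id;
  split; try (move=> /andP[? ?]); intros; split; lra.
Qed.

Theorem proposition3p13 (R : realFieldType) (q : R) :
  0 <= q <= 1 ->
  forall m : {ffun W * X -> R}, CN_eq (lambda_q q) m <-> m = m_q q.
Proof.
move=> hq m; rewrite CN_iff.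
have Ev : [/\ m_q q (w1, x0) = (if q <= 3^-1 then 2/3 else 1 - q),
              m_q q (w1, x1) = (if q <= 3^-1 then 3^-1 - q else 0),
              m_q q (w2, x0) = (if q <= 3^-1 then 0 else if q < 2/3 then 0 else q - 2/3) &
              m_q q (w2, x1) = (if q <= 3^-1 then q else if q < 2/3 then q else 2/3)].
  by rewrite !ffunE /=; split; case: ifP => //; case: ifP.
case: Ev => V1 V2 V3 V4.
split.
{ move=> H; have [K1 K2 K3] := key _ _ _ _ _ hq H.
  apply/ffunP => -[w x].
  case: (I2_cases w) => ->; case: (I2_cases x) => ->;
    rewrite -/w1 -/w2 -/x0 -/x1 ?V1 ?V2 ?V3 ?V4.
  all: case h1: (q <= 3^-1) => /=; [by case: (K1 h1) => ? ? ? ?; lra | ].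
  all: have h1' : 3^-1 < q by rewrite ltNge h1.
  all: case h2: (q < 2/3) => /=;
    [by case: K2; [rewrite h1' h2 | move=> ? ? ? ?; lra]
    | by case: K3; [rewrite leNgt h2 | move=> ? ? ? ?; lra]]. }
- move=> ->; rewrite V1 V2 V3 V4.
  move/andP: hq => [q0 q1].
  case: (lerP q 3^-1) => h1; last case: (ltrP q (2/3)) => h2;
    (split; [split| | | split]) => *; lra.
Qed.
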